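(* Consider a system in which all tasks have the same period, $\tau_X=\tau$ for all $X\in S$. If the system is strictly feasible, then it is fulfilled by the Greedy Maximizer policy.
   Context: A system consists of a finite set $S$ of tasks. Time is slotted, $t\in\{0,1,2,\dots\}$. Each task $X\in S$ has a period $\tau_X$ (a positive integer); time is partitioned into consecutive periods of $X$ of $\tau_X$ slots each, the first starting at $t=0$, and in each period $X$ has one job, removed at the end of the period. Let $T=\mathrm{lcm}\{\tau_X : X\in S\}$; time is partitioned into consecutive frames of $T$ slots each, the $k$-th frame ($k=1,2,\dots$) being the $k$-th such block starting from $t=0$. A scheduling policy chooses in each slot either to idle or to execute the job of exactly one task. Each task $X$ has rewards $r^1_X\ge r^2_X\ge\dots\ge r^{\tau_X}_X\ge 0$: executing the job of $X$ for the $i$-th time within a period yields reward $r^i_X$ to $X$. Let $s_X(t)$ be the total reward obtained by $X$ between time 0 and $t$; the average reward is $q_X=\liminf_{t\to\infty}s_X(t)/(t/T)$. Each task has a minimum requirement $q^*_X>0$; a policy fulfills the system if $q_X\ge q^*_X$ with probability 1 for all $X\in S$. The system is feasible if some policy fulfills it, and strictly feasible if there is $\epsilon>0$ such that the same system with requirements $[(1+\epsilon)q^*_X]$ is feasible. Let $\tilde q_X(k)$ be the total reward obtained by $X$ during the $k$-th frame. The debt of $X$ is $d_X(0)=0$, $d_X(k)=[d_X(k-1)+q^*_X-\tilde q_X(k)]^+$ for $k>0$, with $[x]^+=\max\{x,0\}$. The Greedy Maximizer policy is the following: at the start of each frame the debts are updated by the recursion above (initially all debts are $0$); during the frame, in each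 time slot, letting $i_X$ denote the number of times the job of $X$ has already been executed in its current period (reset to $0$ at the start of each period of $X$), the policy executes the job of a task $Y\in S$ maximizing $r^{i_Y+1}_Y\,d_Y$ over $X\in S$ (using the current debts $d_X$), with ties broken arbitrarily. *)

(* Defs.v *)
From HB Require Import structures.
From mathcomp Require Import all_boot all_order all_algebra.
From mathcomp Require Import all_classical all_reals all_analysis.
Set Implicit Arguments. Unset Strict Implicit. Unset Printing Implicit Defensive.
Import Order.TTheory GRing.Theory Num.Theory.
Local Open Scope ring_scope.

Section Scheduling.
Variables (R : realType) (S : finType).
Variable tau : S -> nat.
(* rewards: r X i is r^i_X, meaningful for 1 <= i <= tau X *)
Variable r : S -> nat -> R.

Definition frameT : nat := \big[lcmn/1%N]_(X : S) tau X.

(* A (deterministic) schedule: in slot t, idle (None) or execute the job of X (Some X). *)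
Definition schedule := nat -> option S.

(* i_X(t): number of times the job of X has been executed in its current
   period before slot t (periods of X are [m*tau X, (m+1)*tau X)). *)
Definition nexec (sched : schedule) (X : S) (t : nat) : nat :=
  (\sum_((t %/ tau X) * tau X <= u < t) (sched u == Some X))%N.

Definition slot_reward (sched : schedule) (X : S) (t : nat) : R :=
  if sched t == Some X then r X (nexec sched X t).+1 else 0.

Definition cum_reward (sched : schedule) (X : S) (t : nat) : R :=
  \sum_(u < t) slot_reward sched X u.

Definition avg_reward (sched : schedule) (X : S) : \bar R :=
  limn_einf (fun t : nat => (cum_reward sched X t / (t%:R / frameT%:R))%:E).

Definition fulfills (q : S -> R) (sched : schedule) : Prop :=
  forall X : S, ((q X)%:E <= avg_reward sched X)%E.

Definition feasible (q : S -> R) : Prop := exists sched : schedule, fulfills q sched.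

Definition strictly_feasible (q : S -> R) : Prop :=
  exists eps : R, 0 < eps /\ feasible (fun X => (1 + eps) * q X).

(* tilde q_X(k): reward of X during the k-th frame (k >= 1), slots [(k-1)T, kT) *)
Definition frame_reward (sched : schedule) (X : S) (k : nat) : R :=
  \sum_(k.-1 * frameT <= u < k * frameT) slot_reward sched X u.

Fixpoint debt (q : S -> R) (sched : schedule) (X : S) (k : nat) : R :=
  match k with
  | 0 => 0
  | k'.+1 => Num.max (debt q sched X k' + q X - frame_reward sched X k'.+1) 0
  end.

(* sched is a run of the Greedy Maximizer policy (with some tie-breaking):
   in slot t, which lies in frame k = t %/ T + 1, the debts are d_X(k-1), and
   the executed task Y maximizes r^{i_Y+1}_Y d_Y. *)
Definition greedy_maximizer (q : S -> R) (sched : schedule) : Prop :=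
  forall t : nat, exists Y : S, sched t = Some Y /\
    forall X : S,
      r X (nexec sched X t).+1 * debt q sched X (t %/ frameT)
      <= r Y (nexec sched Y t).+1 * debt q sched Y (t %/ frameT).

End Scheduling.

(* Main.v *)
Require Import Defs.
From HB Require Import structures.
From mathcomp Require Import all_boot all_order all_algebra.
From mathcomp Require Import all_classical all_reals all_analysis.
From mathcomp Require Import zify ring lra.
Set Implicit Arguments. Unset Strict Implicit. Unset Printing Implicit Defensive.
Import Order.TTheory GRing.Theory Num.Theory.
Local Open Scope ring_scope.

Section Einf.
Local Open Scope ereal_scope.
Lemma einf_sup (R : realType) (u : (\bar R)^nat) :
  limn_einf u = ereal_sup (range (einfs u)).
Proof. by rewrite limn_einf_lim; apply/cvg_lim => //; exact: cvg_einfs_sup. Qed.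

Lemma einf_gt (R : realType) (u : (\bar R)^nat) (a : \bar R) :
  a < limn_einf u -> exists N, forall n, (N <= n)%N -> a <= u n.
Proof.
rewrite einf_sup => /ereal_sup_gt[_ [m _ <-]] am; exists m => n mn.
apply/ltW/(lt_le_trans am)/ereal_inf_lbound; by exists n.
Qed.

Lemma einf_ge (R : realType) (u : (\bar R)^nat) (a : R) :
  (forall e : R, (0 < e)%R -> exists N, forall n, (N <= n)%N -> (a - e)%:E <= u n) ->
  a%:E <= limn_einf u.
Proof.
move=> H; rewrite einf_sup; apply/lee_addgt0Pr => e e0.
have [N HN] := H e e0.
apply: (@le_trans _ _ (einfs u N + e%:E)); last first.
  by rewrite leeD2r //; apply: ereal_sup_ubound; exists N.
rewrite -leeBlDr //.
apply: le_ereal_inf_tmp => _ [n /= Nn <-]; exact: HN.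
Qed.

End Einf.

Section Pf.
Variables (R : realType) (S : finType) (tau : S -> nat) (r : S -> nat -> R) (tau0 : nat).
Hypothesis tau0P : (0 < tau0)%N.
Hypothesis tauE : forall X, tau X = tau0.
Hypothesis rmono : forall X i, (1 <= i)%N -> (i < tau X)%N -> r X i.+1 <= r X i.
Hypothesis rpos : forall X i, (1 <= i <= tau X)%N -> 0 <= r X i.

Definition cnt (sc : schedule S) (X : S) (a n : nat) : nat :=
  (\sum_(a <= u < a + n) (sc u == Some X))%N.

Definition Rs (X : S) (c : nat) : R := \sum_(i < c) r X i.+1.

Lemma cntS sc X a n : cnt sc X a n.+1 = (cnt sc X a n + (sc (a + n) == Some X))%N.
Proof. by rewrite /cnt addnS big_nat_recr //= leq_addr. Qed.

Lemma cnt_le sc X a n : (cnt sc X a n <= n)%N.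
Proof.
elim: n => [|n IH]; first by rewrite /cnt addn0 big_geq.
rewrite cntS; case: (_ == _) => /=; lia.
Qed.

Lemma RsS X c : Rs X c.+1 = Rs X c + r X c.+1.
Proof. by rewrite /Rs big_ord_recr. Qed.

Lemma rmono_le X i k : (1 <= i)%N -> (i <= k)%N -> (k <= tau0)%N -> r X k <= r X i.
Proof.
move=> i1; elim: k => [|k IH] ik ktau; first lia.
case: (ltngtP i k.+1) ik => // ik _; last by rewrite ik.
apply: le_trans (IH _ _); [apply: rmono|lia|lia]; rewrite ?tauE; lia.
Qed.

Lemma rpos0 X i : (1 <= i)%N -> (i <= tau0)%N -> 0 <= r X i.
Proof. move=> *; apply: rpos; rewrite tauE; lia. Qed.

Lemma Rs_ge0 X c : (c <= tau0)%N -> 0 <= Rs X c.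
Proof. move=> ?; rewrite /Rs; apply: sumr_ge0 => i _; apply: rpos0; have := ltn_ord i; lia. Qed.

Lemma Rs_mono X c c' : (c <= c')%N -> (c' <= tau0)%N -> Rs X c <= Rs X c'.
Proof.
move=> cc'; elim: c' cc' => [|c' IH] cc' ct.
  by have -> : c = 0%N by lia.
case: (ltngtP c c'.+1) cc' => // cc' _; last by rewrite cc'.
rewrite RsS; apply: le_trans (IH _ _) _; [lia|lia|].
rewrite lerDl; apply: rpos0; lia.
Qed.

Lemma nexec_cnt sc X m n : (n < tau0)%N ->
  nexec tau sc X (m * tau0 + n) = cnt sc X (m * tau0) n.
Proof.
move=> ntau; rewrite /nexec /cnt tauE.
have -> : ((m * tau0 + n) %/ tau0 = m)%N.
  by rewrite divnMDl // divn_small // addn0.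
by [].
Qed.

Lemma frame_sum sc X m n : (n <= tau0)%N ->
  \sum_(m * tau0 <= u < m * tau0 + n) slot_reward tau r sc X u = Rs X (cnt sc X (m * tau0) n).
Proof.
elim: n => [|n IH] nt; first by rewrite addn0 big_geq // /cnt addn0 big_geq // /Rs big_ord0.
rewrite addnS big_nat_recr ?leq_addr //= IH; last lia.
rewrite cntS /slot_reward nexec_cnt; last lia.
by case: (_ == _); rewrite ?addn0 ?addn1 ?RsS ?addr0.
Qed.


Lemma frameTE (X0 : S) : frameT tau = tau0.
Proof.
rewrite /frameT (eq_bigr (fun=> tau0)) // (bigD1 X0) //=.
apply/lcmn_idPl; elim/big_ind: _ => //= x y Hx Hy.
by rewrite dvdn_lcm Hx Hy.
Qed.

Lemma frame_rewardE (X0 : S) sc X j :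
  frame_reward tau r sc X j.+1 = Rs X (cnt sc X (j * tau0) tau0).
Proof.
rewrite /frame_reward frameTE //= mulSn addnC; exact: frame_sum.
Qed.

Lemma sum_cnt sc a n : (\sum_X cnt sc X a n <= n)%N.
Proof.
elim: n => [|n IH].
  by rewrite big1 // => X _; rewrite /cnt addn0 big_geq.
rewrite (eq_bigr (fun X => cnt sc X a n + (sc (a + n) == Some X))%N); last by move=> X _; rewrite cntS.
rewrite big_split /=.
suff : (\sum_(X : S) (sc (a + n) == Some X) <= 1)%N by lia.
case: (sc (a + n)) => [Y|]; last by rewrite big1.
rewrite (bigD1 Y) //= eqxx big1 // => X XY.
by apply/eqP; rewrite eqb0; apply/eqP => -[] /eqP; rewrite eq_sym (negbTE XY).
Qed.

Lemma slot_reward_ge0 sc X u : 0 <= slot_reward tau r sc X u.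
Proof.
rewrite /slot_reward; case: (_ == _) => //; apply: rpos; apply/andP; split => //.
rewrite /nexec.
have H : (\sum_(u %/ tau X * tau X <= u0 < u) (sc u0 == Some X) <= u - u %/ tau X * tau X)%N.
  apply: leq_trans (_ : \sum_(u %/ tau X * tau X <= u0 < u) 1 <= _)%N.
    by apply: leq_sum => i _; case: (_ == _).
  by rewrite sum_nat_const_nat muln1.
rewrite tauE in H *; have := ltn_pmod u tau0P; have := leq_divM u tau0.
have := divn_eq u tau0; lia.
Qed.

Lemma cum_frames (X0 : S) sc X K :
  cum_reward tau r sc X (K * tau0) = \sum_(j < K) frame_reward tau r sc X j.+1.
Proof.
elim: K => [|K IH]; first by rewrite /cum_reward !big_ord0.
rewrite big_ord_recr /= -IH frame_rewardE // -(frame_sum sc X K (leqnn _)).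
rewrite /cum_reward -!(big_mkord xpredT) mulSn addnC (big_cat_nat _ (leq_addr _ _)) //.
Qed.

Lemma cum_mono sc X t t' : (t <= t')%N -> cum_reward tau r sc X t <= cum_reward tau r sc X t'.
Proof.
move=> tt; rewrite /cum_reward -!(big_mkord xpredT) (big_cat_nat _ tt) //= lerDl.
by apply: sumr_ge0 => *; apply: slot_reward_ge0.
Qed.


Definition F (d : S -> R) (c : S -> nat) := \sum_X d X * Rs X (c X).

Lemma F_ext d c c' : (forall X, c X = c' X) -> F d c = F d c'.
Proof. by move=> H; apply: eq_bigr => X _; rewrite H. Qed.

Lemma sum_ind (Z : S) : (\sum_(X : S) (X == Z))%N = 1%N.
Proof. by rewrite (bigD1 Z) //= eqxx big1 // => X /negbTE ->. Qed.

Lemma Fstep d c Y : F d (fun X => c X + (X == Y))%N = F d c + d Y * r Y (c Y).+1.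
Proof.
rewrite /F (bigD1 Y) //= [in RHS](bigD1 Y) //= eqxx addn1 RsS mulrDr -!addrA; congr (_ + _).
rewrite addrC; congr (_ + _); apply: eq_bigr => X /negbTE ->; by rewrite addn0.
Qed.

Lemma greedy_opt sc d a : (forall X, 0 <= d X) ->
  (forall j, (j < tau0)%N -> exists Y, sc (a + j) = Some Y /\
     forall X, r X (cnt sc X a j).+1 * d X <= r Y (cnt sc Y a j).+1 * d Y) ->
  forall j, (j <= tau0)%N -> forall m : S -> nat, (\sum_X m X <= j)%N ->
    F d m <= F d (fun X => cnt sc X a j).
Proof.
move=> d0 Hg; elim=> [|j IH] jt m sm.
  rewrite /F; apply: ler_sum => X _.
  have -> : m X = 0%N.
    by move: sm; rewrite (bigD1 X) //=; lia.
  by rewrite /cnt addn0 big_geq.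
have [Y [HY HgY]] := Hg j jt.
have cE : forall X, cnt sc X a j.+1 = (cnt sc X a j + (X == Y))%N.
  move=> X; rewrite cntS HY; case: (X =P Y) => [->|XY]; first by rewrite eqxx.
  have -> : (Some Y == Some X) = false by apply/eqP => -[] E; apply: XY.
  by [].
rewrite (F_ext _ cE) Fstep.
have cY0 : 0 <= d Y * r Y (cnt sc Y a j).+1.
  by apply: mulr_ge0 => //; apply: rpos0 => //; have := cnt_le sc Y a j; lia.
case: (pickP (fun Z => cnt sc Z a j < m Z)%N) => [Z HZ | Hno]; last first.
  apply: le_trans (_ : F d (fun X => cnt sc X a j) <= _); last by rewrite lerDl.
  apply: ler_sum => X _; apply: ler_wpM2l => //; apply: Rs_mono.
    by have := Hno X; rewrite /= ltnNge => /negbFE.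
  by have := cnt_le sc X a j; lia.
pose m' X := if X == Z then (m Z).-1 else m X.
have mE : forall X, m X = (m' X + (X == Z))%N.
  move=> X; rewrite /m'; case: (X =P Z) => [->|_]; last by rewrite addn0.
  by move: HZ => /= HZ; lia.
have mZt : (m Z <= j.+1)%N by move: sm; rewrite (bigD1 Z) //=; lia.
have sm' : (\sum_X m' X <= j)%N.
  move: sm; rewrite (eq_bigr _ (fun X _ => mE X)) big_split /= sum_ind; lia.
rewrite (F_ext _ mE) Fstep; apply: lerD; first by apply: IH => //; lia.
have -> : (m' Z).+1 = m Z by rewrite /m' eqxx; move: HZ => /= HZ; lia.
apply: (@le_trans _ _ (d Z * r Z (cnt sc Z a j).+1)).
  apply: ler_wpM2l => //; apply: rmono_le => //; move: HZ => /= HZ; lia.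
by rewrite mulrC [X in _ <= X]mulrC; apply: HgY.
Qed.


Variable q : S -> R.
Hypothesis qpos : forall X, 0 < q X.
Variable X0 : S.

Lemma greedy_frame sc : greedy_maximizer tau r q sc -> forall j (m : S -> nat),
  (\sum_X m X <= tau0)%N ->
  F (fun X => debt tau r q sc X j) m <=
  \sum_X debt tau r q sc X j * frame_reward tau r sc X j.+1.
Proof.
move=> Hg j m sm.
rewrite (eq_bigr (fun X => debt tau r q sc X j * Rs X (cnt sc X (j * tau0) tau0))); last first.
  by move=> X _; rewrite frame_rewardE.
apply: (greedy_opt (a := j * tau0)) => //.
  by move=> X; case: j => [|j] //=; rewrite le_max lexx orbT.
move=> i it; have [Y [HY HgY]] := Hg (j * tau0 + i)%N.
have E : ((j * tau0 + i) %/ frameT tau = j)%N.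
  by rewrite (frameTE X0) divnMDl // divn_small // addn0.
exists Y; split => // X; have := HgY X; rewrite E !nexec_cnt //.
Qed.

Lemma debt_ge0 sc X j : 0 <= debt tau r q sc X j.
Proof. by case: j => [|j] //=; rewrite le_max lexx orbT. Qed.


Lemma feas_K eps sc' : 0 < eps ->
  fulfills tau r (fun X => (1 + eps) * q X) sc' ->
  exists K : nat, (0 < K)%N /\ forall X,
    K%:R * ((1 + eps / 2) * q X) <= \sum_(j < K) frame_reward tau r sc' X j.+1.
Proof.
move=> e0 Hf.
have H X : exists N, forall t, (N <= t)%N ->
    (((1 + eps / 2) * q X)%:E <=
     (cum_reward tau r sc' X t / (t%:R / (frameT tau)%:R))%:E)%E.
  apply: einf_gt; apply: (lt_le_trans _ (Hf X)); rewrite lte_fin.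
  by rewrite ltr_pM2r // ltrD2l ltr_pdivrMr // ltr_pMr // ltr1n.
have [Nf HN] := choice H.
pose N := (\max_X Nf X)%N.
exists N.+1; split => // X.
have := HN X (N.+1 * tau0)%N.
have -> : (N.+1 * tau0)%:R / (frameT tau)%:R = N.+1%:R :> R.
  by rewrite (frameTE X0) natrM mulfK // pnatr_eq0 -lt0n.
rewrite cum_frames // lee_fin ler_pdivlMr ?ltr0n // mulrC.
apply; apply: leq_trans (leq_pmulr _ tau0P); apply: leq_trans (leqnSn _).
exact: leq_bigmax.
Qed.

Lemma drift sc eps sc' : greedy_maximizer tau r q sc -> 0 < eps ->
  fulfills tau r (fun X => (1 + eps) * q X) sc' -> forall j,
  (1 + eps / 2) * \sum_X debt tau r q sc X j * q X <=
  \sum_X debt tau r q sc X j * frame_reward tau r sc X j.+1.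
Proof.
move=> Hg e0 Hf j; have [K [K0 HK]] := feas_K e0 Hf.
set d := fun X => debt tau r q sc X j.
set G := (X in _ <= X).
rewrite -(@ler_pM2l _ K%:R) ?ltr0n //.
apply: (@le_trans _ _ (\sum_(i < K) \sum_X d X * frame_reward tau r sc' X i.+1)); last first.
  apply: (@le_trans _ _ (\sum_(i < K) G)); last first.
    by rewrite sumr_const card_ord mulr_natl.
  apply: ler_sum => i _.
  rewrite (eq_bigr (fun X => d X * Rs X (cnt sc' X (i * tau0) tau0))); last first.
    by move=> X _; rewrite frame_rewardE.
  exact: (greedy_frame Hg j (sum_cnt _ _ _)).
rewrite exchange_big /= mulrA mulr_sumr.
apply: ler_sum => X _; rewrite -mulr_sumr.
have -> : K%:R * (1 + eps / 2) * (d X * q X) = d X * (K%:R * ((1 + eps / 2) * q X)) by ring.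
apply: ler_wpM2l; first exact: debt_ge0.
exact: HK.
Qed.


Variables (sc sc' : schedule S) (eps : R).
Hypothesis Hg : greedy_maximizer tau r q sc.
Hypothesis e0 : 0 < eps.
Hypothesis Hf : fulfills tau r (fun X => (1 + eps) * q X) sc'.

Let D j X := debt tau r q sc X j.
Let v j X := frame_reward tau r sc X j.+1.
Let Vm X := Rs X tau0.
Let C := \sum_X (q X + Vm X) ^+ 2.
Let L j := \sum_X D j X ^+ 2.
Let del := eps / 2.

Lemma v_bnd j X : 0 <= v j X <= Vm X.
Proof.
rewrite /v frame_rewardE // Rs_ge0 ?cnt_le //=; apply: Rs_mono => //; exact: cnt_le.
Qed.

Lemma D_ge0 j X : 0 <= D j X.
Proof. exact: debt_ge0. Qed.

Lemma DS j X : D j.+1 X = Num.max (D j X + q X - v j X) 0.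
Proof. by []. Qed.

Lemma L_step j : L j.+1 <= L j + C - 2 * del * \sum_X D j X * q X.
Proof.
have Hd := drift Hg e0 Hf j.
have H1 : L j.+1 <= \sum_X (D j X ^+ 2 + (q X + Vm X) ^+ 2 + 2 * (D j X * q X) - 2 * (D j X * v j X)).
  apply: ler_sum => X _; rewrite DS.
  have := v_bnd j X; have := qpos X; have := D_ge0 j X.
  set x := D j X; set y := v j X; set z := q X; set w := Vm X.
  move=> h1 h2 /andP[h3 h4].
  apply: (@le_trans _ _ ((x + z - y) ^+ 2)).
    rewrite maxEle; case: ifP => _; last by [].
    by rewrite expr0n /= sqr_ge0.
  rewrite !expr2; nra.
apply: le_trans H1 _.
rewrite sumrB !big_split /= -!mulr_sumr -/(L j) -/C.
rewrite /del; move: Hd; rewrite /D /v.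
set A := \sum_X _ * q X; set B := \sum_X _ * _.
move=> Hd.
have A0 : 0 <= A by apply: sumr_ge0 => X _; apply: mulr_ge0; [exact: debt_ge0|exact: ltW].
lra.
Qed.


Let B := \sum_X (C / (2 * del * q X)) ^+ 2.

Lemma C_ge0 : 0 <= C.
Proof. by apply: sumr_ge0 => X _; apply: sqr_ge0. Qed.

Lemma L_bnd j : L j <= B + C.
Proof.
have B0 : 0 <= B by apply: sumr_ge0 => X _; apply: sqr_ge0.
have C0 := C_ge0.
elim: j => [|j IH].
  rewrite /L big1; first lra.
  by move=> X _; rewrite /D /= expr0n.
have Hs := L_step j.
have del0 : 0 < del by rewrite /del divr_gt0.
have A0 : 0 <= \sum_X D j X * q X.
  by apply: sumr_ge0 => X _; apply: mulr_ge0; [exact: D_ge0|exact: ltW].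
have [hC|hC] := lerP C (2 * del * \sum_X D j X * q X).
  lra.
have dA : 0 <= 2 * del * \sum_X D j X * q X by rewrite !mulr_ge0 // ltW.
suff : L j <= B by lra.
apply: ler_sum => X _.
have hX : D j X * q X <= \sum_X D j X * q X.
  rewrite (bigD1 X) //= lerDl; apply: sumr_ge0 => Y _; apply: mulr_ge0; [exact: D_ge0|exact: ltW].
have qX := qpos X.
have hD : D j X <= C / (2 * del * q X).
  rewrite ler_pdivlMr; last by rewrite !mulr_gt0.
  have h2 : 0 <= 2 * del by lra.
  have := ler_wpM2l h2 hX; lra.
have := D_ge0 j X; rewrite !expr2; nra.
Qed.

Lemma D_bnd j X : D j X <= 1 + (B + C).
Proof.
have h : D j X ^+ 2 <= B + C.
  apply: le_trans (L_bnd j); rewrite /L (bigD1 X) //= lerDl.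
  by apply: sumr_ge0 => Y _; apply: sqr_ge0.
have := D_ge0 j X; move: h; rewrite expr2; nra.
Qed.

Lemma cum_D k X : k%:R * q X <= \sum_(i < k) v i X + D k X.
Proof.
elim: k => [|k IH]; first by rewrite big_ord0 /D /= mul0r addr0.
rewrite big_ord_recr /= DS.
have := le_max (D k X + q X - v k X) (D k X + q X - v k X) 0; rewrite lexx /= => h.
rewrite -natr1 mulrDl mul1r; lra.
Qed.


Lemma main_X X : ((q X)%:E <= avg_reward tau r sc X)%E.
Proof.
apply: einf_ge => e e0'.
set M' := 1 + (B + C).
have qX := qpos X.
pose k0 := Num.trunc ((q X + M') / e).
have hk0 := truncnS_gt ((q X + M') / e).
exists (k0.+1 * tau0)%N => t Nt.
pose k := (t %/ tau0)%N.
have kk0 : (k0.+1 <= k)%N by rewrite /k -(mulnK k0.+1 tau0P) leq_div2r.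
have hk1 : (k * tau0 <= t)%N by apply: leq_divM.
have hk2 : (t < k.+1 * tau0)%N.
  by rewrite /k mulSn addnC {1}(divn_eq t tau0) ltn_add2l ltn_pmod.
have kR : k0.+1%:R <= k%:R :> R by rewrite ler_nat.
have t1 : k%:R * tau0%:R <= t%:R :> R by rewrite -natrM ler_nat.
have t2 : t%:R <= k.+1%:R * tau0%:R :> R by rewrite -natrM ler_nat ltnW.
have T0 : 0 < tau0%:R :> R by rewrite ltr0n.
rewrite (frameTE X) lee_fin.
set x := t%:R / tau0%:R.
have x1 : k%:R <= x by rewrite /x ler_pdivlMr.
have x2 : x <= k.+1%:R by rewrite /x ler_pdivrMr.
have k1 : 1 <= k%:R :> R by rewrite ler1n; lia.
have x0 : 0 < x by lra.
rewrite ler_pdivlMr //.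
have hc : k%:R * q X - M' <= cum_reward tau r sc X t.
  apply: le_trans (cum_mono _ _ hk1); rewrite cum_frames //.
  have := cum_D k X; have := D_bnd k X; rewrite /v /D /M'; lra.
apply: le_trans hc.
have he : q X + M' < e * k%:R.
  have h3 : (q X + M') / e < k%:R := lt_le_trans hk0 kR.
  by move: h3; rewrite ltr_pdivrMr // mulrC.
rewrite -natr1 in x2; nra.
Qed.

End Pf.

Theorem theorem8 (R : realType) (S : finType) (tau : S -> nat)
  (r : S -> nat -> R) (qstar : S -> R) (tau0 : nat) :
  (0 < tau0)%N ->
  (forall X, tau X = tau0) ->
  (forall X i, (1 <= i)%N -> (i < tau X)%N -> r X i.+1 <= r X i) ->
  (forall X i, (1 <= i <= tau X)%N -> 0 <= r X i) ->
  (forall X, 0 < qstar X) ->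
  strictly_feasible tau r qstar ->
  forall sched : schedule S,
    greedy_maximizer tau r qstar sched ->
    fulfills tau r qstar sched.
Proof.
move=> t0 tE rm rp qp [eps [e0 [sc' Hf]]] sc Hg X.
exact: (main_X t0 tE rm rp qp X Hg e0 Hf X).
Qed.
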